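(* For any vertex $i\in[n]$ (fixed as $n\to\infty$), $h_{n,2}(i)/\sqrt{\ln n}\to0$ in probability as $n\to\infty$.
   Context: Kingman's $n$-coalescent $(F_n,\dots,F_1)$: forests on $[n]$, rooted trees with edges directed towards roots; $F_n$ has no edges; for $2\le i\le n$, list the trees of $F_i$ as $T^{(i)}_1,\dots,T^{(i)}_i$ in increasing order of smallest label, choose $\{a_i,b_i\}$ uniformly among 2-subsets of $[i]$ and an independent fair bit $\xi_i$ (independent over $i$), and obtain $F_{i-1}$ by adding an edge between the roots of $T^{(i)}_{a_i},T^{(i)}_{b_i}$ directed towards the root of $T^{(i)}_{\min(a_i,b_i)}$ if $\xi_i=1$, towards the other root otherwise. $h_{F_j}(v)$ is the depth of $v$ in its tree in $F_j$; $h_n(v)=h_{F_1}(v)$; $h_{n,1}(v)=h_{F_{\lfloor\ln^2 n\rfloor}}(v)$; $h_{n,2}(v)=h_n(v)-h_{n,1}(v)$. *)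

(* Defs.v *)
(* finite uniform probability over all choice sequences of
   Kingman's n-coalescent, real logarithm/sqrt from Stdlib Reals. *)
From Stdlib Require Import Reals Lra Lia Arith List ZArith.
Import ListNotations.
Open Scope R_scope.

(* A forest on [n] = {1,...,n}: parent map; [None] means root. *)
Definition forest := nat -> option nat.

Definition empty_forest : forest := fun _ => None.

(* root of v (fuel bounded by n, which suffices: depths are < n) *)
Fixpoint root_fuel (F : forest) (fuel v : nat) : nat :=
  match fuel with
  | O => v
  | S f => match F v with None => v | Some p => root_fuel F f p end
  end.

Fixpoint depth_fuel (F : forest) (fuel v : nat) : nat :=
  match fuel with
  | O => O
  | S f => match F v with None => O | Some p => S (depth_fuel F f p) end
  end.

Definition depth (n : nat) (F : forest) (v : nat) : nat := depth_fuel F n v.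

Definition undup_first (l : list nat) : list nat :=
  fold_left (fun acc x => if existsb (Nat.eqb x) acc then acc else acc ++ [x])
    l [].

(* roots of the trees of F, listed in increasing order of the smallest label
   of their tree: scanning v = 1..n, the first occurrences of root(v). *)
Definition ordered_roots (n : nat) (F : forest) : list nat :=
  undup_first (map (root_fuel F n) (seq 1 n)).

(* a choice at step i: (a, b, xi) with 1 <= a < b <= i (the 2-subset {a,b})
   and the fair bit xi *)
Definition choice := (nat * nat * bool)%type.

Definition choices (i : nat) : list choice :=
  flat_map (fun b => flat_map (fun a => [(a, b, true); (a, b, false)])
                              (seq 1 (b - 1)))
           (seq 1 i).

(* all choice sequences for steps i, i-1, ..., 2 *)
Fixpoint paths (i : nat) : list (list choice) :=
  match i with
  | O => [nil]
  | S j => match j with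
           | O => [nil]
           | S _ => flat_map (fun c => map (cons c) (paths j)) (choices i)
           end
  end.

(* one coalescence step: trees T_a, T_b (1-based positions, a < b) are
   merged by an edge between their roots, directed towards the root of
   T_a = T_(min(a,b)) if xi = true, towards the root of T_b otherwise. *)
Definition step (n : nat) (F : forest) (c : choice) : forest :=
  let '(a, b, xi) := c in
  let rs := ordered_roots n F in
  let ra := nth (a - 1) rs 0%nat in
  let rb := nth (b - 1) rs 0%nat in
  let child := if xi then rb else ra in
  let par := if xi then ra else rb in
  fun v => if Nat.eqb v child then Some par else F v.

(* F_j, obtained from F_n (no edges) after n - j steps of the path *)
Definition forest_at (n : nat) (p : list choice) (j : nat) : forest :=
  fold_left (step n) (firstn (n - j) p) empty_forest.

Definition h_n (n : nat) (p : list choice) (v : nat) : nat :=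
  depth n (forest_at n p 1) v.

Definition ln2_floor (n : nat) : nat := Z.to_nat (Int_part (ln (INR n) ^ 2)).

Definition h_n1 (n : nat) (p : list choice) (v : nat) : nat :=
  depth n (forest_at n p (ln2_floor n)) v.

Definition h_n2 (n : nat) (p : list choice) (v : nat) : R :=
  INR (h_n n p v) - INR (h_n1 n p v).

Definition prob (n : nat) (E : list choice -> bool) : R :=
  INR (length (filter E (paths n))) / INR (length (paths n)).

Definition Rltb (x y : R) : bool := if Rlt_dec x y then true else false.

(* Main.v *)
Require Import Defs.
From Stdlib Require Import Reals.
Open Scope R_scope.
From Stdlib Require Import Lra Lia Arith List ZArith.
Import ListNotations.

Open Scope R_scope.

Fixpoint rch (F : forest) (k v : nat) : Prop :=
  match k with
  | O => F v = None
  | S k' => exists p, F v = Some p /\ rch F k' p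
  end.

Lemma depth_rch F k v fuel : rch F k v -> (k <= fuel)%nat -> depth_fuel F fuel v = k.
Proof.
  revert k v; induction fuel as [|f IH]; intros k v H Hk.
  - assert (k = 0%nat) by lia; subst; reflexivity.
  - destruct k as [|k']; simpl in H |- *.
    + rewrite H; reflexivity.
    + destruct H as [p [Hp Hr]]; rewrite Hp; f_equal; apply IH; auto; lia.
Qed.

Lemma root_rch F k v fuel : rch F k v -> (k <= fuel)%nat ->
  root_fuel F fuel v = root_fuel F k v.
Proof.
  revert k v; induction fuel as [|f IH]; intros k v H Hk.
  - assert (k = 0%nat) by lia; subst; reflexivity.
  - destruct k as [|k']; simpl in H |- *.
    + rewrite H; reflexivity.
    + destruct H as [p [Hp Hr]]; rewrite Hp; apply IH; auto; lia.
Qed.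

Lemma root_is_root F k v : rch F k v -> F (root_fuel F k v) = None.
Proof.
  revert v; induction k as [|k IH]; intros v H; simpl in *.
  - exact H.
  - destruct H as [p [Hp Hr]]; rewrite Hp; auto.
Qed.

Definition upd (F : forest) (c p : nat) : forest :=
  fun v => if Nat.eqb v c then Some p else F v.

Lemma upd_rch F c p k v : F c = None -> F p = None -> c <> p -> rch F k v ->
  (root_fuel F k v = c -> rch (upd F c p) (S k) v /\ root_fuel (upd F c p) (S k) v = p) /\
  (root_fuel F k v <> c -> rch (upd F c p) k v /\ root_fuel (upd F c p) k v = root_fuel F k v).
Proof.
  intros Hc Hp Hcp. revert v; induction k as [|k IH]; intros v H.
  - simpl in H. simpl. split; intro E.
    + subst v. unfold upd. rewrite Nat.eqb_refl. split.
      * exists p. split; auto. destruct (Nat.eqb_spec p c); [congruence|auto].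
      * reflexivity.
    + unfold upd. destruct (Nat.eqb_spec v c); [congruence|]. auto.
  - simpl in H. destruct H as [q [Hq Hr]].
    assert (Hvc : v <> c) by congruence.
    assert (Hu : upd F c p v = Some q) by (unfold upd; destruct (Nat.eqb_spec v c); congruence).
    simpl. rewrite Hq. destruct (IH q Hr) as [A B]. split; intro E.
    + destruct (A E) as [A1 A2]. split.
      * exists q; auto.
      * rewrite Hu; auto.
    + destruct (B E) as [B1 B2]. split.
      * exists q; auto.
      * rewrite Hu; auto.
Qed.


Definition ufs := (fun (acc : list nat) (x : nat) => if existsb (Nat.eqb x) acc then acc else acc ++ [x]).

Lemma existsb_in x acc : existsb (Nat.eqb x) acc = true <-> In x acc.
Proof.
  rewrite existsb_exists. split.
  - intros [y [Hy E]]. apply Nat.eqb_eq in E. subst; auto.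
  - intros H. exists x. split; auto. apply Nat.eqb_refl.
Qed.

Lemma uf_in : forall l acc x, In x (fold_left ufs l acc) <-> In x acc \/ In x l.
Proof.
  induction l as [|y l IH]; intros acc x; simpl.
  - tauto.
  - rewrite IH. unfold ufs at 1. destruct (existsb (Nat.eqb y) acc) eqn:E.
    + apply existsb_in in E. split; [tauto|]. intros [H|[H|H]]; subst; auto.
    + rewrite in_app_iff. simpl. tauto.
Qed.

Lemma uf_nodup : forall l acc, NoDup acc -> NoDup (fold_left ufs l acc).
Proof.
  induction l as [|y l IH]; intros acc H; simpl; auto.
  apply IH. unfold ufs. destruct (existsb (Nat.eqb y) acc) eqn:E; auto.
  assert (~ In y acc) by (intro X; apply existsb_in in X; congruence).
  apply NoDup_app; auto.
  - constructor; auto. constructor.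
  - intros a Ha Hb. simpl in Hb. destruct Hb as [Hb|[]]; subst; auto.
Qed.

Lemma undup_in l x : In x (undup_first l) <-> In x l.
Proof. unfold undup_first. change (In x (fold_left ufs l []) <-> In x l). rewrite uf_in. simpl; tauto. Qed.

Lemma undup_nodup l : NoDup (undup_first l).
Proof. unfold undup_first. change (NoDup (fold_left ufs l [])). apply uf_nodup. constructor. Qed.

Lemma same_len (a b : list nat) : NoDup a -> NoDup b -> (forall x, In x a <-> In x b) ->
  length a = length b.
Proof.
  intros Ha Hb H. apply Nat.le_antisymm; apply NoDup_incl_length; auto; intros x; apply H.
Qed.

Lemma remove_len (c : nat) u : NoDup u -> In c u -> length (remove Nat.eq_dec c u) = pred (length u).
Proof.
  induction u as [|y u IH]; intros Hn Hi; simpl in *; [contradiction|].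
  inversion Hn; subst. destruct (Nat.eq_dec c y).
  - subst. rewrite notin_remove; auto.
  - simpl. destruct Hi as [Hi|Hi]; [congruence|]. rewrite IH; auto.
    destruct u; simpl in *; [contradiction|lia].
Qed.

Lemma remove_nodup (c : nat) u : NoDup u -> NoDup (remove Nat.eq_dec c u).
Proof.
  induction u as [|y u IH]; intros Hn; simpl; [constructor|].
  inversion Hn; subst. destruct (Nat.eq_dec c y); auto.
  constructor; auto. intro X; apply in_remove in X. tauto.
Qed.

Definition gmap (c p x : nat) : nat := if Nat.eqb x c then p else x.

Lemma undup_merge (L : list nat) c p : In c L -> In p L -> c <> p ->
  length (undup_first (map (gmap c p) L)) = pred (length (undup_first L)).
Proof.
  intros Hc Hp Hcp.
  rewrite <- (remove_len c); [| apply undup_nodup | apply undup_in; auto].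
  apply same_len; [apply undup_nodup | apply remove_nodup, undup_nodup |].
  intros x. split.
  - intros H. apply undup_in, in_map_iff in H. destruct H as [y [E Hy]].
    unfold gmap in E. apply in_in_remove; [|apply undup_in];
    destruct (Nat.eqb_spec y c); subst; auto; congruence.
  - intros H. apply in_remove in H. destruct H as [Hx Hxc]. apply (proj1 (undup_in _ _)) in Hx.
    apply undup_in, in_map_iff.
    exists x. split; auto. unfold gmap. destruct (Nat.eqb_spec x c); congruence.
Qed.

Open Scope nat_scope.

Definition Inv n m F := (forall v, exists k, (k <= m)%nat /\ rch F k v) /\
  length (ordered_roots n F) = (n - m)%nat.

Lemma in_roots_root n m F x : Inv n m F -> (m <= n)%nat -> In x (ordered_roots n F) ->
  F x = None /\ In x (map (root_fuel F n) (seq 1 n)).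
Proof.
  intros [H1 H2] Hm Hx. unfold ordered_roots in Hx. apply (proj1 (undup_in _ _)) in Hx.
  split; auto. apply in_map_iff in Hx. destruct Hx as [v [E _]]. subst x.
  destruct (H1 v) as [k [Hk Hr]]. rewrite (root_rch _ k); [|auto|lia]. eapply root_is_root; eauto.
Qed.

Lemma upd_inv n m F c p : Inv n m F -> (m + 2 <= n)%nat -> F c = None -> F p = None -> c <> p ->
  In c (map (root_fuel F n) (seq 1 n)) -> In p (map (root_fuel F n) (seq 1 n)) ->
  Inv n (S m) (upd F c p) /\
  forall v, depth n (upd F c p) v = (depth n F v + if Nat.eqb c (root_fuel F n v) then 1 else 0)%nat.
Proof.
  intros [H1 H2] Hm Hc Hp Hcp Hic Hip.
  assert (K : forall v, exists k, (k <= m)%nat /\ rch F k v /\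
     (root_fuel F n v = c -> rch (upd F c p) (S k) v /\ root_fuel (upd F c p) n v = p
        /\ depth n (upd F c p) v = S (depth n F v)) /\
     (root_fuel F n v <> c -> rch (upd F c p) k v /\ root_fuel (upd F c p) n v = root_fuel F n v
        /\ depth n (upd F c p) v = depth n F v)).
  { intros v. destruct (H1 v) as [k [Hk Hr]]. exists k. split; [auto|split; [auto|]].
    destruct (upd_rch F c p k v Hc Hp Hcp Hr) as [A B].
    unfold depth. rewrite (root_rch F k v n Hr) by lia. rewrite (depth_rch F k v n Hr) by lia.
    split; intro E.
    - destruct (A E) as [A1 A2]. rewrite (root_rch _ (S k) v n A1) by lia.
      rewrite (depth_rch _ (S k) v n A1) by lia. auto.
    - destruct (B E) as [B1 B2]. rewrite (root_rch _ k v n B1) by lia.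
      rewrite (depth_rch _ k v n B1) by lia. auto. }
  split; [split|].
  - intros v. destruct (K v) as [k [Hk [Hr [A B]]]].
    destruct (Nat.eq_dec (root_fuel F n v) c) as [E|E].
    + exists (S k); split; [lia|]. apply A; auto.
    + exists k; split; [lia|]. apply B; auto.
  - unfold ordered_roots.
    replace (map (root_fuel (upd F c p) n) (seq 1 n)) with
      (map (gmap c p) (map (root_fuel F n) (seq 1 n))).
    + rewrite undup_merge; auto. unfold ordered_roots in H2. rewrite H2. lia.
    + rewrite map_map. apply map_ext. intros v. destruct (K v) as [k [Hk [Hr [A B]]]].
      unfold gmap. destruct (Nat.eqb_spec (root_fuel F n v) c) as [E|E].
      * symmetry; apply A; auto.
      * symmetry; apply B; auto.
  - intros v. destruct (K v) as [k [Hk [Hr [A B]]]].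
    destruct (Nat.eqb_spec c (root_fuel F n v)) as [E|E].
    + rewrite (proj2 (proj2 (A (eq_sym E)))). lia.
    + rewrite (proj2 (proj2 (B (fun X => E (eq_sym X))))). lia.
Qed.

Definition cidx (c : choice) : nat := let '(a,b,xi) := c in if xi then b else a.
Definition pidx (c : choice) : nat := let '(a,b,xi) := c in if xi then a else b.

Lemma step_upd n F c : step n F c =
  upd F (nth (cidx c - 1) (ordered_roots n F) 0) (nth (pidx c - 1) (ordered_roots n F) 0).
Proof. destruct c as [[a b] xi]; destruct xi; reflexivity. Qed.

Lemma choices_in j c : In c (choices j) -> let '(a,b,xi) := c in (1 <= a < b /\ b <= j)%nat.
Proof.
  intros H. unfold choices in H. apply in_flat_map in H. destruct H as [b [Hb H]].
  apply in_flat_map in H. destruct H as [a [Ha H]]. apply in_seq in Hb, Ha.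
  simpl in H. destruct H as [H|[H|[]]]; subst; lia.
Qed.

Lemma step_inv n m F c : Inv n m F -> (m + 2 <= n)%nat -> In c (choices (n - m)) ->
  Inv n (S m) (step n F c) /\
  forall v, depth n (step n F c) v = (depth n F v +
     if Nat.eqb (nth (cidx c - 1) (ordered_roots n F) 0) (root_fuel F n v) then 1 else 0)%nat.
Proof.
  intros HI Hm Hc. rewrite step_upd.
  pose proof (choices_in _ _ Hc) as Hab. destruct c as [[a b] xi]. simpl.
  pose proof (proj2 HI) as Hlen.
  assert (ND := undup_nodup (map (root_fuel F n) (seq 1 n))). fold (ordered_roots n F) in ND.
  assert (Ia : In (nth (a-1) (ordered_roots n F) 0) (ordered_roots n F)) by (apply nth_In; lia).
  assert (Ib : In (nth (b-1) (ordered_roots n F) 0) (ordered_roots n F)) by (apply nth_In; lia).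
  assert (Nab : nth (a-1) (ordered_roots n F) 0 <> nth (b-1) (ordered_roots n F) 0).
  { intro E. apply (proj1 (NoDup_nth _ 0)) in E; auto; lia. }
  destruct (in_roots_root _ _ _ _ HI ltac:(lia) Ia) as [Ra La].
  destruct (in_roots_root _ _ _ _ HI ltac:(lia) Ib) as [Rb Lb].
  destruct xi; apply upd_inv; auto.
Qed.

Open Scope nat_scope.

Definition fstate n F (q : list choice) t := fold_left (step n) (firstn t q) F.
Definition indc n i F (q : list choice) t : bool :=
  match nth_error q t with
  | Some c => Nat.eqb (nth (cidx c - 1) (ordered_roots n (fstate n F q t)) 0)
                      (root_fuel (fstate n F q t) n i)
  | None => false end.

Lemma paths_SS j : paths (S (S j)) = flat_map (fun c => map (cons c) (paths (S j))) (choices (S (S j))).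
Proof. reflexivity. Qed.

Lemma paths_cons j q : 2 <= j -> In q (paths j) ->
  exists c q', q = c :: q' /\ In c (choices j) /\ In q' (paths (j - 1)).
Proof.
  intros Hj H. destruct j as [|[|j]]; try lia.
  rewrite paths_SS in H. apply in_flat_map in H. destruct H as [c [Hc H]].
  apply in_map_iff in H. destruct H as [q' [E H]]. subst. exists c, q'.
  replace (S (S j) - 1) with (S j) by lia. auto.
Qed.

Lemma paths_len j q : In q (paths j) -> length q = j - 1.
Proof.
  revert q; induction j as [|j IH]; intros q H.
  - simpl in H. destruct H as [H|[]]; subst; reflexivity.
  - destruct j as [|j'].
    + simpl in H. destruct H as [H|[]]; subst; reflexivity.
    + destruct (paths_cons (S (S j')) q ltac:(lia) H) as [c [q' [E [_ H']]]]. subst.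
      simpl. rewrite (IH q'); [lia|]. replace (S (S j') - 1) with (S j') in H' by lia. auto.
Qed.

Lemma inv_walk n : forall t j F q, Inv n (n - j) F -> j <= n -> In q (paths j) -> t < j ->
  Inv n (n - j + t) (fstate n F q t) /\
  (t + 1 < j -> exists c, nth_error q t = Some c /\ In c (choices (j - t))).
Proof.
  induction t as [|t IH]; intros j F q HI Hj Hq Ht.
  - split.
    + rewrite Nat.add_0_r. exact HI.
    + intros Hj2. destruct (paths_cons j q ltac:(lia) Hq) as [c [q' [E [Hc _]]]]. subst.
      exists c. split; [reflexivity|]. rewrite Nat.sub_0_r; auto.
  - destruct (paths_cons j q ltac:(lia) Hq) as [c [q' [E [Hc Hq']]]]. subst q.
    assert (HI' : Inv n (n - (j - 1)) (step n F c)).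
    { replace (n - (j - 1)) with (S (n - j)) by lia.
      apply (step_inv n (n - j) F c HI); [lia|]. replace (n - (n - j)) with j by lia. auto. }
    destruct (IH (j - 1) (step n F c) q' HI' ltac:(lia) Hq' ltac:(lia)) as [A B].
    split.
    + replace (n - j + S t) with (n - (j - 1) + t) by lia. exact A.
    + intros Hj2. destruct (B ltac:(lia)) as [c' [E1 E2]]. exists c'. split; auto.
      replace (j - S t) with (j - 1 - t) by lia. auto.
Qed.

Lemma firstn_S_nth {A} (q : list A) t c : nth_error q t = Some c ->
  firstn (S t) q = firstn t q ++ [c].
Proof.
  revert t; induction q as [|x q IH]; intros t H; destruct t; simpl in *; try discriminate.
  - inversion H; subst; reflexivity.
  - f_equal. apply IH; auto.
Qed.

Lemma inv_empty n : Inv n 0 empty_forest.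
Proof.
  split.
  - intros v. exists 0. split; [lia|reflexivity].
  - unfold ordered_roots.
    replace (map (root_fuel empty_forest n) (seq 1 n)) with (seq 1 n).
    + rewrite Nat.sub_0_r. rewrite <- (length_seq n 1) at 2. apply same_len.
      * apply undup_nodup.
      * apply seq_NoDup.
      * intros x. apply undup_in.
    + rewrite <- map_id at 1. apply map_ext. intros v. destruct n; reflexivity.
Qed.

Definition b2n (b : bool) : nat := if b then 1 else 0.

Lemma walk_depth n i q t : In q (paths n) -> t + 1 < n ->
  depth n (fstate n empty_forest q (S t)) i =
  depth n (fstate n empty_forest q t) i + b2n (indc n i empty_forest q t).
Proof.
  intros Hq Ht.
  assert (HI0 : Inv n (n - n) empty_forest) by (rewrite Nat.sub_diag; apply inv_empty).
  destruct (inv_walk n t n empty_forest q HI0 (le_n n) Hq ltac:(lia)) as [A B].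
  destruct (B Ht) as [c [E Hc]]. rewrite Nat.sub_diag, Nat.add_0_l in A.
  unfold indc. rewrite E.
  assert (Hf : fstate n empty_forest q (S t) = step n (fstate n empty_forest q t) c).
  { unfold fstate. rewrite (firstn_S_nth q t c E), fold_left_app. reflexivity. }
  rewrite Hf. destruct (step_inv n t _ c A ltac:(lia) Hc) as [_ D]. rewrite D. reflexivity.
Qed.

Open Scope nat_scope.

Lemma choices_S j : choices (S j) =
  choices j ++ flat_map (fun a => [(a, S j, true); (a, S j, false)]) (seq 1 j).
Proof.
  unfold choices at 1. rewrite seq_S, flat_map_app. simpl. rewrite app_nil_r, Nat.sub_0_r.
  reflexivity.
Qed.

Lemma count_inner (e : nat -> bool) b l :
  length (filter (fun c => e (cidx c)) (flat_map (fun a => [(a, b, true); (a, b, false)]) l)) =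
  length l * b2n (e b) + length (filter e l).
Proof.
  induction l as [|a l IH]; simpl; auto.
  unfold b2n in *. destruct (e a), (e b); simpl; rewrite IH; lia.
Qed.

Lemma count_choices (e : nat -> bool) j :
  length (filter (fun c => e (cidx c)) (choices j)) = (j - 1) * length (filter e (seq 1 j)).
Proof.
  induction j as [|j IH]; [reflexivity|].
  rewrite choices_S, filter_app, length_app, IH, count_inner, length_seq.
  rewrite seq_S, filter_app, length_app. simpl.
  destruct j as [|j].
  - simpl. unfold b2n. destruct (e 1); simpl; lia.
  - unfold b2n. destruct (e (S (S j))); simpl; nia.
Qed.

Lemma map_nth_seq1 (rs : list nat) : map (fun x => nth (x - 1) rs 0) (seq 1 (length rs)) = rs.
Proof.
  induction rs as [|y rs IH]; [reflexivity|].
  simpl length. rewrite <- cons_seq. simpl map. f_equal.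
  rewrite <- seq_shift, map_map. rewrite <- IH at 2. apply map_ext_in.
  intros x Hx. apply in_seq in Hx. destruct x; [lia|]. simpl. rewrite Nat.sub_0_r. reflexivity.
Qed.

Lemma count_eq_notin (rs : list nat) r : ~ In r rs -> length (filter (fun z => Nat.eqb z r) rs) = 0.
Proof.
  induction rs as [|y rs IH]; intros H; simpl; auto.
  destruct (Nat.eqb_spec y r); simpl in H; [exfalso; auto|]. apply IH; tauto.
Qed.

Lemma count_eq_le1 (rs : list nat) r : NoDup rs -> length (filter (fun z => Nat.eqb z r) rs) <= 1.
Proof.
  induction rs as [|y rs IH]; intros H; simpl; auto.
  inversion H; subst. destruct (Nat.eqb_spec y r).
  - subst. simpl. rewrite count_eq_notin; auto.
  - apply IH; auto.
Qed.

Lemma count_child_le (rs : list nat) r j : NoDup rs -> length rs = j ->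
  length (filter (fun c => Nat.eqb (nth (cidx c - 1) rs 0) r) (choices j)) <= j - 1.
Proof.
  intros ND Hl.
  rewrite (count_choices (fun x => Nat.eqb (nth (x - 1) rs 0) r) j).
  assert (length (filter (fun x => Nat.eqb (nth (x - 1) rs 0) r) (seq 1 j)) <= 1).
  { subst j.
    pose proof (filter_map_swap (fun z => Nat.eqb z r) (fun x => nth (x - 1) rs 0) (seq 1 (length rs))) as E.
    rewrite map_nth_seq1 in E. apply (f_equal (@length nat)) in E. rewrite length_map in E.
    rewrite <- E. apply count_eq_le1; auto. }
  nia.
Qed.

Lemma length_choices j : length (choices j) = j * (j - 1).
Proof.
  pose proof (count_choices (fun _ => true) j) as H.
  rewrite filter_true in H. rewrite filter_true, length_seq in H. simpl in H.
  rewrite H. lia.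
Qed.

Open Scope nat_scope.

Lemma filter_ext' {A} (f g : A -> bool) l : (forall x, f x = g x) ->
  filter f l = filter g l.
Proof. intros H; induction l as [|x l IH]; simpl; auto. rewrite H, IH; auto. Qed.

Lemma filter_const {A} (b : bool) (l : list A) : length (filter (fun _ => b) l) = b2n b * length l.
Proof. induction l as [|x l IH]; simpl; [lia|]. destruct b; simpl in *; lia. Qed.

Lemma filter_flat_cons {A} (f : list A -> bool) (P : list (list A)) C :
  length (filter f (flat_map (fun c => map (cons c) P) C)) =
  list_sum (map (fun c => length (filter (fun q => f (c :: q)) P)) C).
Proof.
  induction C as [|c C IH]; simpl; auto.
  rewrite filter_app, length_app, IH, filter_map_swap, length_map. reflexivity.
Qed.

Lemma length_flat_cons {A} (P : list (list A)) C :
  length (flat_map (fun c => map (cons c) P) C) = length C * length P.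
Proof.
  induction C as [|c C IH]; simpl; auto. rewrite length_app, IH, length_map. lia.
Qed.

Lemma sum_b2n {A} (g : A -> bool) K C :
  list_sum (map (fun c => b2n (g c) * K) C) = length (filter g C) * K.
Proof. induction C as [|c C IH]; simpl; auto. rewrite IH. destruct (g c); simpl; lia. Qed.

Lemma sum_bound {A} (h : A -> nat) w K C : (forall c, In c C -> h c * w <= K) ->
  list_sum (map h C) * w <= length C * K.
Proof.
  induction C as [|c C IH]; intros H; simpl; auto.
  rewrite Nat.mul_add_distr_r. pose proof (H c (or_introl eq_refl)).
  assert (list_sum (map h C) * w <= length C * K) by (apply IH; intros; apply H; simpl; auto). lia.
Qed.

Lemma count_ind n i : forall t j F, Inv n (n - j) F -> j <= n -> t + 1 < j ->
  length (filter (fun q => indc n i F q t) (paths j)) * (j - t) <= length (paths j).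
Proof.
  induction t as [|t IH]; intros j F HI Hj Ht;
    (destruct j as [|[|j']]; [lia|lia|]); rewrite paths_SS, filter_flat_cons, length_flat_cons.
  - set (Lp := length (paths (S j'))).
    set (rs := ordered_roots n F).
    set (g := fun c => Nat.eqb (nth (cidx c - 1) rs 0) (root_fuel F n i)).
    rewrite (map_ext _ (fun c => b2n (g c) * Lp)).
    2:{ intros c. unfold Lp. rewrite <- (filter_const (g c) (paths (S j'))). reflexivity. }
    rewrite sum_b2n.
    assert (HND : NoDup rs) by apply undup_nodup.
    assert (Hlen : length rs = S (S j')) by (unfold rs; rewrite (proj2 HI); lia).
    pose proof (count_child_le rs (root_fuel F n i) (S (S j')) HND Hlen) as Hc.
    fold g in Hc. rewrite length_choices. rewrite Nat.sub_0_r. replace (S (S j') - 1) with (S j') in * by lia. set (x := length (filter g _)) in *. assert (x * Lp <= S j' * Lp) by (apply Nat.mul_le_mono_r; auto). nia.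
  - set (Lp := length (paths (S j'))).
    rewrite (map_ext _ (fun c => length (filter (fun q => indc n i (step n F c) q t) (paths (S j'))))).
    2:{ intros c. reflexivity. }
    apply sum_bound. intros c Hc.
    replace (S (S j') - S t) with (S j' - t) by lia.
    apply IH; [| lia | lia].
    replace (n - S j') with (S (n - S (S j'))) by lia.
    apply (step_inv n _ F c HI); [lia|]. replace (n - (n - S (S j'))) with (S (S j')) by lia. auto.
Qed.

Lemma count_main n i t : t + 1 < n ->
  length (filter (fun q => indc n i empty_forest q t) (paths n)) * (n - t) <= length (paths n).
Proof.
  intros Ht. apply count_ind; [| lia | lia]. rewrite Nat.sub_diag. apply inv_empty.
Qed.

Lemma paths_pos j : 0 < length (paths j).
Proof.
  induction j as [|j IH]; [simpl; lia|]. destruct j as [|j]; [simpl; lia|].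
  rewrite paths_SS, length_flat_cons, length_choices. nia.
Qed.

Open Scope R_scope.

Lemma tele n i q s L : In q (paths n) -> (s + L + 1 <= n)%nat ->
  depth n (fstate n empty_forest q (s + L)) i =
  (depth n (fstate n empty_forest q s) i +
   list_sum (map (fun t => b2n (indc n i empty_forest q t)) (seq s L)))%nat.
Proof.
  intros Hq. induction L as [|L IH]; intros HL.
  - simpl. rewrite Nat.add_0_r. lia.
  - rewrite seq_S, map_app, list_sum_app. simpl.
    replace (s + S L)%nat with (S (s + L)) by lia.
    rewrite walk_depth; auto; [|lia]. rewrite IH by lia. lia.
Qed.

Definition Nsum n i q := list_sum (map (fun t => b2n (indc n i empty_forest q t))
   (seq (n - ln2_floor n) (n - 1 - (n - ln2_floor n)))).

Lemma h_n2_eq n i q : (1 <= n)%nat -> In q (paths n) -> h_n2 n q i = INR (Nsum n i q).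
Proof.
  intros Hn Hq. unfold h_n2, h_n, h_n1, Nsum.
  change (forest_at n q 1) with (fstate n empty_forest q (n - 1)).
  change (forest_at n q (ln2_floor n)) with (fstate n empty_forest q (n - ln2_floor n)).
  set (s := (n - ln2_floor n)%nat).
  destruct (le_lt_dec s (n - 1)) as [Hs|Hs].
  - replace (n - 1)%nat with (s + (n - 1 - s))%nat at 1 by lia.
    rewrite tele; auto; [|lia]. rewrite plus_INR. ring.
  - replace (n - 1 - s)%nat with 0%nat by lia. simpl.
    assert (E : fstate n empty_forest q s = fstate n empty_forest q (n - 1)).
    { unfold fstate. pose proof (paths_len n q Hq).
      rewrite !firstn_all2 by lia. reflexivity. }
    rewrite E. ring.
Qed.

Lemma markov {A} (P : list A) (E : A -> bool) (N : A -> nat) x : 0 <= x ->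
  (forall p, In p P -> E p = true -> x < INR (N p)) ->
  INR (length (filter E P)) * x <= INR (list_sum (map N P)).
Proof.
  intros Hx. induction P as [|p P IH]; intros H; cbn [filter length map list_sum].
  - simpl; lra.
  - change (list_sum (N p :: map N P)) with (N p + list_sum (map N P))%nat. rewrite plus_INR. assert (IH' := IH (fun q Hq => H q (or_intror Hq))).
    destruct (E p) eqn:Ep; cbn [length].
    + rewrite S_INR. pose proof (H p (or_introl eq_refl) Ep). lra.
    + pose proof (pos_INR (N p)). lra.
Qed.

Lemma list_sum_add {A} (f g : A -> nat) T :
  list_sum (map (fun t => f t + g t)%nat T) = (list_sum (map f T) + list_sum (map g T))%nat.
Proof. induction T as [|t T IH]; simpl; auto. rewrite IH. lia. Qed.

Lemma swap_sum {A B} (f : A -> B -> bool) (P : list A) (T : list B) :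
  list_sum (map (fun p => list_sum (map (fun t => b2n (f p t)) T)) P) =
  list_sum (map (fun t => length (filter (fun p => f p t) P)) T).
Proof.
  induction P as [|p P IH]; simpl.
  - induction T as [|t T IHT]; simpl; auto.
  - rewrite IH. rewrite <- list_sum_add. f_equal. apply map_ext. intros t.
    destruct (f p t); reflexivity.
Qed.

Lemma sum_real {A} (h : A -> nat) (g : A -> R) K T : (forall t, In t T -> INR (h t) <= K * g t) ->
  INR (list_sum (map h T)) <= K * fold_right Rplus 0 (map g T).
Proof.
  induction T as [|t T IH]; intros H; simpl.
  - lra.
  - rewrite plus_INR. pose proof (H t (or_introl eq_refl)).
    assert (INR (list_sum (map h T)) <= K * fold_right Rplus 0 (map g T))
      by (apply IH; intros; apply H; simpl; auto). lra.
Qed.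

Lemma ln_le' x y : 0 < x -> x <= y -> ln x <= ln y.
Proof.
  intros Hx Hxy. destruct (Rle_lt_or_eq_dec _ _ Hxy) as [H|H].
  - left; apply ln_increasing; auto.
  - subst; lra.
Qed.

Lemma harm_step m : 1 <= m -> 1 / (m + 1) <= ln (m + 1) - ln m.
Proof.
  intros Hm.
  assert (Hy : 0 < m / (m + 1)) by (apply Rdiv_lt_0_compat; lra).
  assert (E : m = (m + 1) * (m / (m + 1))) by (field; lra).
  assert (Hl : ln m = ln (m + 1) + ln (m / (m + 1))).
  { rewrite E at 1. apply ln_mult; lra. }
  assert (Hb : m / (m + 1) <= exp (- (1 / (m + 1)))).
  { pose proof (exp_ineq1_le (- (1 / (m + 1)))).
    replace (m / (m + 1)) with (1 + - (1 / (m + 1))) by (field; lra). lra. }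
  apply ln_le' in Hb; auto. rewrite ln_exp in Hb. lra.
Qed.

Lemma harmonic : forall L s n, (n - s = S L)%nat ->
  fold_right Rplus 0 (map (fun t => 1 / INR (n - t)) (seq s L)) <= ln (INR (S L)).
Proof.
  induction L as [|L IH]; intros s n H.
  - simpl. rewrite ln_1. lra.
  - simpl (seq s (S L)). simpl map. simpl fold_right.
    rewrite H. pose proof (IH (S s) n ltac:(lia)).
    pose proof (harm_step (INR (S L)) ltac:(apply (le_INR 1); lia)).
    rewrite <- S_INR in H1. lra.
Qed.

Open Scope R_scope.

Lemma final_ineq eps d y : 0 < eps -> 0 < d -> (8 / (eps * d) + 1) ^ 4 < y ->
  2 * ln y / (eps * sqrt y) < d.
Proof.
  intros He Hd Hy.
  set (t := 8 / (eps * d)) in *.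
  assert (Ht : eps * d * t = 8) by (unfold t; field; lra).
  assert (Ht0 : 0 < t) by (unfold t; apply Rdiv_lt_0_compat; nra).
  set (M := t + 1) in *.
  assert (HM4 : 0 < M ^ 4) by (apply pow_lt; unfold M; lra).
  assert (Hy0 : 0 < y) by lra.
  set (z := sqrt (sqrt y)).
  assert (Hsy : 0 < sqrt y) by (apply sqrt_lt_R0; lra).
  assert (Hz0 : 0 < z) by (apply sqrt_lt_R0; lra).
  assert (Hzz : z * z = sqrt y) by (apply sqrt_sqrt; lra).
  assert (Hyy : sqrt y * sqrt y = y) by (apply sqrt_sqrt; lra).
  assert (HzM : M < z).
  { assert (A : M * M < sqrt y).
    { rewrite <- (sqrt_pow2 (M * M)) by (unfold M; nra).
      apply sqrt_lt_1_alt. split; [nra|]. replace ((M * M) ^ 2) with (M ^ 4) by ring. lra. }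
    unfold z. rewrite <- (sqrt_pow2 M) by (unfold M; lra).
    apply sqrt_lt_1_alt. split; [nra|]. simpl. lra. }
  assert (Hln : ln y = 4 * ln z).
  { replace y with (z ^ 4) at 1 by (simpl; nra). rewrite ln_pow by lra. simpl. ring. }
  assert (Hlz : ln z < z).
  { pose proof (exp_ineq1_le z). rewrite <- (ln_exp z) at 2. apply ln_increasing; lra. }
  assert (Hedz : 8 < eps * d * z).
  { assert (eps * d * t < eps * d * z) by (apply Rmult_lt_compat_l; [nra|unfold M in HzM; lra]). lra. }
  rewrite Hln, <- Hzz.
  apply (Rmult_lt_reg_r (eps * (z * z))); [nra|].
  unfold Rdiv. rewrite Rmult_assoc, Rinv_l by nra. nra.
Qed.

Open Scope R_scope.

Lemma prob_bound n i x : (1 <= n)%nat -> 0 < x ->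
  prob n (fun p => Rltb x (Rabs (h_n2 n p i))) <=
  ln (INR (S (n - 1 - (n - ln2_floor n)))) / x.
Proof.
  intros Hn Hx. unfold prob.
  set (P := paths n). set (s := (n - ln2_floor n)%nat). set (L := (n - 1 - s)%nat).
  set (E := fun p => Rltb x (Rabs (h_n2 n p i))).
  assert (HP : 0 < INR (length P)) by (apply lt_0_INR, paths_pos).
  assert (M := markov P E (Nsum n i) x ltac:(lra)).
  assert (M' : INR (length (filter E P)) * x <= INR (list_sum (map (Nsum n i) P))).
  { apply M. intros p Hp Ep. unfold E, Rltb in Ep.
    destruct (Rlt_dec x (Rabs (h_n2 n p i))) as [H|H]; [|discriminate].
    rewrite h_n2_eq in H; auto. rewrite Rabs_pos_eq in H; auto. apply pos_INR. }
  clear M.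
  assert (S1 : INR (list_sum (map (Nsum n i) P)) <=
      INR (length P) * fold_right Rplus 0 (map (fun t => 1 / INR (n - t)) (seq s L))).
  { unfold Nsum. fold s. fold L.
    rewrite (swap_sum (fun p t => indc n i empty_forest p t)).
    apply sum_real. intros t Ht. apply in_seq in Ht.
    pose proof (count_main n i t ltac:(unfold L in Ht; lia)) as C. fold P in C.
    apply le_INR in C. rewrite mult_INR in C.
    assert (0 < INR (n - t)) by (apply lt_0_INR; lia).
    unfold Rdiv. rewrite Rmult_1_l.
    apply (Rmult_le_reg_r (INR (n - t))); auto.
    rewrite Rmult_assoc, Rinv_l by lra. lra. }
  assert (S2 : fold_right Rplus 0 (map (fun t => 1 / INR (n - t)) (seq s L)) <= ln (INR (S L))).
  { destruct L as [|L'] eqn:EL.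
    - simpl. rewrite ln_1. lra.
    - apply harmonic. unfold L in EL. lia. }
  assert (Hmain : INR (length (filter E P)) * x <= INR (length P) * ln (INR (S L))).
  { pose proof (Rmult_le_compat_l (INR (length P)) _ _ (Rlt_le _ _ HP) S2). lra. }
  apply (Rmult_le_reg_r (INR (length P) * x)); [nra|].
  replace (INR (length (filter E P)) / INR (length P) * (INR (length P) * x))
    with (INR (length (filter E P)) * x) by (field; lra).
  replace (ln (INR (S L)) / x * (INR (length P) * x))
    with (INR (length P) * ln (INR (S L))) by (field; lra).
  exact Hmain.
Qed.

Open Scope R_scope.

Lemma k_bound n : 1 <= ln (INR n) -> INR (ln2_floor n) <= ln (INR n) ^ 2.
Proof.
  intros H. unfold ln2_floor. set (w := ln (INR n) ^ 2).
  assert (Hw : 1 <= w) by (unfold w; nra).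
  destruct (base_Int_part w) as [A B].
  assert (Hz : (0 < Int_part w)%Z) by (apply lt_IZR; simpl; lra).
  rewrite INR_IZR_INZ, Z2Nat.id by lia. exact A.
Qed.

Theorem lemma5p2 (i : nat) (hi : (1 <= i)%nat) :
  forall eps : R, 0 < eps ->
  Un_cv (fun n : nat =>
           prob n (fun p => Rltb (eps * sqrt (ln (INR n))) (Rabs (h_n2 n p i))))
        0.
Proof.
  intros eps He d Hd.
  set (Y := (8 / (eps * d) + 1) ^ 4 + 1).
  assert (HY : 1 <= Y).
  { unfold Y. assert (0 < 8 / (eps * d)) by (apply Rdiv_lt_0_compat; nra).
    assert (0 <= (8 / (eps * d) + 1) ^ 4) by (apply pow_le; lra). lra. }
  set (r := exp Y).
  destruct (archimed r) as [Ar _].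
  assert (Hr : 0 < r) by apply exp_pos.
  exists (Z.to_nat (up r)). intros n Hn.
  assert (Hup : (0 <= up r)%Z) by (apply le_IZR; simpl; lra).
  assert (HnR : r < INR n).
  { apply le_INR in Hn. rewrite INR_IZR_INZ, Z2Nat.id in Hn by lia. lra. }
  assert (Hy : Y < ln (INR n)).
  { unfold r in HnR. rewrite <- (ln_exp Y). apply ln_increasing; auto. }
  set (y := ln (INR n)) in *.
  assert (Hn1 : (1 <= n)%nat).
  { destruct n; [simpl in HnR; lra | lia]. }
  assert (Hx : 0 < eps * sqrt y) by (apply Rmult_lt_0_compat; auto; apply sqrt_lt_R0; lra).
  pose proof (prob_bound n i (eps * sqrt y) Hn1 Hx) as PB.
  set (L := (n - 1 - (n - ln2_floor n))%nat) in *.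
  assert (HL : INR (S L) <= y ^ 2).
  { destruct (Nat.le_gt_cases (S L) 1) as [C|C].
    - apply le_INR in C. assert (1 <= y ^ 2) by (simpl; nra). change (INR 1) with 1 in C. lra.
    - assert (S L <= ln2_floor n)%nat by (unfold L in *; lia).
      apply le_INR in H. pose proof (k_bound n ltac:(unfold y in Hy; lra)). fold y in H0. lra. }
  assert (Hln : ln (INR (S L)) <= 2 * ln y).
  { replace (2 * ln y) with (ln (y ^ 2)) by (rewrite ln_pow by lra; simpl; ring).
    apply ln_le'; auto. apply lt_0_INR; lia. }
  assert (Hpos : 0 <= prob n (fun p => Rltb (eps * sqrt y) (Rabs (h_n2 n p i)))).
  { unfold prob. apply Rmult_le_pos; [apply pos_INR|].
    left. apply Rinv_0_lt_compat, lt_0_INR, paths_pos. }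
  pose proof (final_ineq eps d y He Hd ltac:(unfold Y in Hy; lra)) as FI.
  unfold R_dist. rewrite Rminus_0_r, Rabs_pos_eq by auto.
  eapply Rle_lt_trans; [exact PB|].
  eapply Rle_lt_trans; [|exact FI].
  unfold Rdiv. apply Rmult_le_compat_r; [left; apply Rinv_0_lt_compat; auto|]. exact Hln.
Qed.
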